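(* Let $P \subseteq \mathbb{R}^7$ be an associative $3$-plane. Then the $3$-dimensional subspace $\Psi(P) = \mathrm{Span}\{\Psi_{uv} : u,v \in P\}$ of $\Lambda^2(\mathbb{R}^7)$ is a Lie subalgebra isomorphic to $\mathfrak{so}(3)$.
   Context: Equip $\mathbb{R}^7$ with its standard inner product, orientation and basis. Let $\varphi = e_{123} - e_{167} - e_{527} - e_{563} - e_{415} - e_{426} - e_{437}$ ($e_{ijk} = e_i\wedge e_j\wedge e_k$), $\psi = \star\varphi = e_{4567} - e_{4523} - e_{4163} - e_{4127} - e_{2637} - e_{1537} - e_{1526}$, and define $\times$ by $\langle u \times v, w \rangle = \varphi(u,v,w)$. A $3$-dimensional subspace is associative if closed under $\times$. $\Psi_{uv}$ is the skew bilinear form $(x,y)\mapsto \psi(u,v,x,y)$. Skew bilinear forms $X$ are identified with skew-adjoint operators via $X(x,y) = \langle X(x), y \rangle$, so $\Lambda^2(\mathbb{R}^7) = \mathfrak{so}(7)$ with bracket the commutator. *)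

(* Defs.v *)
(* R : realType, vectors are row vectors 'rV[R]_7,
   subspaces of R^7 are row spaces of matrices (mxalgebra). *)
From HB Require Import structures.
From mathcomp Require Import all_boot all_order all_algebra.
From mathcomp Require Import reals.
Set Implicit Arguments. Unset Strict Implicit. Unset Printing Implicit Defensive.
Import Order.TTheory GRing.Theory Num.Theory.
Local Open Scope ring_scope.

Section G2.
Variable R : realType.
Local Notation vec := 'rV[R]_7.

(* basis index: e_n (n = 1..7) is coordinate n-1 *)
Definition ix (n : nat) : 'I_7 := inord n.-1.

Definition ev (n : nat) : vec := delta_mx 0 (ix n).

Definition dot (u v : vec) : R := \sum_(k < 7) u 0 k * v 0 k.

(* (e_i ^ e_j ^ e_k)(u,v,w) = det [ x_a(e-index) ] *)
Definition e3 (i j k : nat) (u v w : vec) : R :=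
  let vs := [tuple u; v; w] in
  let js := [tuple ix i; ix j; ix k] in
  \det (\matrix_(a < 3, b < 3) (tnth vs b) 0 (tnth js a)).

Definition e4 (i j k l : nat) (u v w x : vec) : R :=
  let vs := [tuple u; v; w; x] in
  let js := [tuple ix i; ix j; ix k; ix l] in
  \det (\matrix_(a < 4, b < 4) (tnth vs b) 0 (tnth js a)).

Definition phi (u v w : vec) : R :=
  e3 1 2 3 u v w - e3 1 6 7 u v w - e3 5 2 7 u v w - e3 5 6 3 u v w
  - e3 4 1 5 u v w - e3 4 2 6 u v w - e3 4 3 7 u v w.

Definition psi (u v w x : vec) : R :=
  e4 4 5 6 7 u v w x - e4 4 5 2 3 u v w x - e4 4 1 6 3 u v w x
  - e4 4 1 2 7 u v w x - e4 2 6 3 7 u v w x - e4 1 5 3 7 u v w x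
  - e4 1 5 2 6 u v w x.

(* cross product: <u x v, w> = phi(u,v,w); coordinates are phi(u,v,e_k) *)
Definition cross (u v : vec) : vec := \row_k phi u v (delta_mx 0 k).

Definition associative_plane (P : 'M[R]_7) : Prop :=
  \rank P = 3%N /\
  forall u v : vec, (u <= P)%MS -> (v <= P)%MS -> (cross u v <= P)%MS.

(* Psi_{uv} as a skew-adjoint operator acting on column vectors:
   column j is Psi_{uv}(e_j), whose i-th coordinate is
   <Psi_{uv}(e_j), e_i> = psi(u,v,e_j,e_i). *)
Definition Psi (u v : vec) : 'M[R]_7 :=
  \matrix_(i < 7, j < 7) psi u v (delta_mx 0 j) (delta_mx 0 i).

Definition lie {n : nat} (A B : 'M[R]_n) : 'M[R]_n := A *m B - B *m A.

Definition PsiSpan (P : 'M[R]_7) (X : 'M[R]_7) : Prop :=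
  exists (n : nat) (c : 'I_n -> R) (u v : 'I_n -> vec),
    (forall i, (u i <= P)%MS /\ (v i <= P)%MS) /\
    X = \sum_(i < n) c i *: Psi (u i) (v i).

Definition so3 (X : 'M[R]_3) : Prop := X^T = - X.

End G2.

(* Main.v *)
Require Import Defs.
From HB Require Import structures.
From mathcomp Require Import all_boot all_order all_algebra.
From mathcomp Require Import reals.
From mathcomp Require Import ring lra.
Import Order.TTheory GRing.Theory Num.Theory.
Local Open Scope ring_scope.
Set Implicit Arguments. Unset Strict Implicit. Unset Printing Implicit Defensive.

Definition o0 : 'I_7 := @Ordinal 7 0 isT.
Definition o1 : 'I_7 := @Ordinal 7 1 isT.
Definition o2 : 'I_7 := @Ordinal 7 2 isT.
Definition o3 : 'I_7 := @Ordinal 7 3 isT.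
Definition o4 : 'I_7 := @Ordinal 7 4 isT.
Definition o5 : 'I_7 := @Ordinal 7 5 isT.
Definition o6 : 'I_7 := @Ordinal 7 6 isT.

Lemma ord7 (i : 'I_7) : i = o0 \/ i = o1 \/ i = o2 \/ i = o3 \/ i = o4 \/ i = o5 \/ i = o6.
Proof.
case: i => [[|[|[|[|[|[|[|i]]]]]]] Hi].
- by left; apply: val_inj.
- by right; left; apply: val_inj.
- by do 2 right; left; apply: val_inj.
- by do 3 right; left; apply: val_inj.
- by do 4 right; left; apply: val_inj.
- by do 5 right; left; apply: val_inj.
- by do 6 right; apply: val_inj.
- by [].
Qed.

Lemma sum7 (R : nmodType) (F : 'I_7 -> R) : \sum_(k < 7) F k = F o0 + F o1 + F o2 + F o3 + F o4 + F o5 + F o6.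
Proof.
rewrite !big_ord_recr big_ord0 /= add0r.
congr (_ + _ + _ + _ + _ + _ + _); congr F; exact: val_inj.
Qed.

Lemma ixE : (ix 1 = o0) * (ix 2 = o1) * (ix 3 = o2) * (ix 4 = o3) * (ix 5 = o4) * (ix 6 = o5) * (ix 7 = o6).
Proof. by do !split; apply: val_inj; rewrite /= inordK. Qed.

Lemma det3 (R : comRingType) (f : nat -> nat -> R) : \det (\matrix_(i < 3, j < 3) f i j) = 0 + f 0%N 0%N * f 1%N 1%N * f 2%N 2%N - f 0%N 0%N * f 1%N 2%N * f 2%N 1%N - f 0%N 1%N * f 1%N 0%N * f 2%N 2%N + f 0%N 1%N * f 1%N 2%N * f 2%N 0%N + f 0%N 2%N * f 1%N 0%N * f 2%N 1%N - f 0%N 2%N * f 1%N 1%N * f 2%N 0%N.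
Proof.
by do ![rewrite (expand_det_row _ ord0) /cofactor !big_ord_recr big_ord0 /=]; rewrite ?det_mx00 !mxE /=; ring.
Qed.
Lemma det4 (R : comRingType) (f : nat -> nat -> R) : \det (\matrix_(i < 4, j < 4) f i j) = 0 + f 0%N 0%N * f 1%N 1%N * f 2%N 2%N * f 3%N 3%N - f 0%N 0%N * f 1%N 1%N * f 2%N 3%N * f 3%N 2%N - f 0%N 0%N * f 1%N 2%N * f 2%N 1%N * f 3%N 3%N + f 0%N 0%N * f 1%N 2%N * f 2%N 3%N * f 3%N 1%N + f 0%N 0%N * f 1%N 3%N * f 2%N 1%N * f 3%N 2%N - f 0%N 0%N * f 1%N 3%N * f 2%N 2%N * f 3%N 1%N - f 0%N 1%N * f 1%N 0%N * f 2%N 2%N * f 3%N 3%N + f 0%N 1%N * f 1%N 0%N * f 2%N 3%N * f 3%N 2%N + f 0%N 1%N * f 1%N 2%N * f 2%N 0%N * f 3%N 3%N - f 0%N 1%N * f 1%N 2%N * f 2%N 3%N * f 3%N 0%N - f 0%N 1%N * f 1%N 3%N * f 2%N 0%N * f 3%N 2%N + f 0%N 1%N * f 1%N 3%N * f 2%N 2%N * f 3%N 0%N + f 0%N 2%N * f 1%N 0%N * f 2%N 1%N * f 3%N 3%N - f 0%N 2%N * f 1%N 0%N * f 2%N 3%N * f 3%N 1%N - f 0%N 2%N * f 1%N 1%N * f 2%N 0%N * f 3%N 3%N + f 0%N 2%N * f 1%N 1%N * f 2%N 3%N * f 3%N 0%N + f 0%N 2%N * f 1%N 3%N * f 2%N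 0%N * f 3%N 1%N - f 0%N 2%N * f 1%N 3%N * f 2%N 1%N * f 3%N 0%N - f 0%N 3%N * f 1%N 0%N * f 2%N 1%N * f 3%N 2%N + f 0%N 3%N * f 1%N 0%N * f 2%N 2%N * f 3%N 1%N + f 0%N 3%N * f 1%N 1%N * f 2%N 0%N * f 3%N 2%N - f 0%N 3%N * f 1%N 1%N * f 2%N 2%N * f 3%N 0%N - f 0%N 3%N * f 1%N 2%N * f 2%N 0%N * f 3%N 1%N + f 0%N 3%N * f 1%N 2%N * f 2%N 1%N * f 3%N 0%N.
Proof.
by do ![rewrite (expand_det_row _ ord0) /cofactor !big_ord_recr big_ord0 /=]; rewrite ?det_mx00 !mxE /=; ring.
Qed.

Definition crossf (R : ringType) (a b : 'I_7 -> R) (k : nat) : R :=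
  match k with
  | 0%N => (a o1 * b o2 - a o2 * b o1 + a o3 * b o4 - a o4 * b o3 - a o5 * b o6 + a o6 * b o5)
  | 1%N => (- a o0 * b o2 + a o2 * b o0 + a o3 * b o5 + a o4 * b o6 - a o5 * b o3 - a o6 * b o4)
  | 2%N => (a o0 * b o1 - a o1 * b o0 + a o3 * b o6 - a o4 * b o5 + a o5 * b o4 - a o6 * b o3)
  | 3%N => (- a o0 * b o4 - a o1 * b o5 - a o2 * b o6 + a o4 * b o0 + a o5 * b o1 + a o6 * b o2)
  | 4%N => (a o0 * b o3 - a o1 * b o6 + a o2 * b o5 - a o3 * b o0 - a o5 * b o2 + a o6 * b o1)
  | 5%N => (a o0 * b o6 + a o1 * b o3 - a o2 * b o4 - a o3 * b o1 + a o4 * b o2 - a o6 * b o0)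
  | 6%N => (- a o0 * b o5 + a o1 * b o4 + a o2 * b o3 - a o3 * b o2 - a o4 * b o1 + a o5 * b o0)
  | _ => 0 end.
Definition Psif (R : ringType) (a b : 'I_7 -> R) (i j : nat) : R :=
  match i, j with
  | 0%N, 0%N => 0
  | 0%N, 1%N => (a o3 * b o6 - a o4 * b o5 + a o5 * b o4 - a o6 * b o3)
  | 0%N, 2%N => (- a o3 * b o5 - a o4 * b o6 + a o5 * b o3 + a o6 * b o4)
  | 0%N, 3%N => (- a o1 * b o6 + a o2 * b o5 - a o5 * b o2 + a o6 * b o1)
  | 0%N, 4%N => (a o1 * b o5 + a o2 * b o6 - a o5 * b o1 - a o6 * b o2)
  | 0%N, 5%N => (- a o1 * b o4 - a o2 * b o3 + a o3 * b o2 + a o4 * b o1)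
  | 0%N, 6%N => (a o1 * b o3 - a o2 * b o4 - a o3 * b o1 + a o4 * b o2)
  | 1%N, 0%N => (- a o3 * b o6 + a o4 * b o5 - a o5 * b o4 + a o6 * b o3)
  | 1%N, 1%N => 0
  | 1%N, 2%N => (a o3 * b o4 - a o4 * b o3 - a o5 * b o6 + a o6 * b o5)
  | 1%N, 3%N => (a o0 * b o6 - a o2 * b o4 + a o4 * b o2 - a o6 * b o0)
  | 1%N, 4%N => (- a o0 * b o5 + a o2 * b o3 - a o3 * b o2 + a o5 * b o0)
  | 1%N, 5%N => (a o0 * b o4 + a o2 * b o6 - a o4 * b o0 - a o6 * b o2)
  | 1%N, 6%N => (- a o0 * b o3 - a o2 * b o5 + a o3 * b o0 + a o5 * b o2)
  | 2%N, 0%N => (a o3 * b o5 + a o4 * b o6 - a o5 * b o3 - a o6 * b o4)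
  | 2%N, 1%N => (- a o3 * b o4 + a o4 * b o3 + a o5 * b o6 - a o6 * b o5)
  | 2%N, 2%N => 0
  | 2%N, 3%N => (- a o0 * b o5 + a o1 * b o4 - a o4 * b o1 + a o5 * b o0)
  | 2%N, 4%N => (- a o0 * b o6 - a o1 * b o3 + a o3 * b o1 + a o6 * b o0)
  | 2%N, 5%N => (a o0 * b o3 - a o1 * b o6 - a o3 * b o0 + a o6 * b o1)
  | 2%N, 6%N => (a o0 * b o4 + a o1 * b o5 - a o4 * b o0 - a o5 * b o1)
  | 3%N, 0%N => (a o1 * b o6 - a o2 * b o5 + a o5 * b o2 - a o6 * b o1)
  | 3%N, 1%N => (- a o0 * b o6 + a o2 * b o4 - a o4 * b o2 + a o6 * b o0)
  | 3%N, 2%N => (a o0 * b o5 - a o1 * b o4 + a o4 * b o1 - a o5 * b o0)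
  | 3%N, 3%N => 0
  | 3%N, 4%N => (a o1 * b o2 - a o2 * b o1 - a o5 * b o6 + a o6 * b o5)
  | 3%N, 5%N => (- a o0 * b o2 + a o2 * b o0 + a o4 * b o6 - a o6 * b o4)
  | 3%N, 6%N => (a o0 * b o1 - a o1 * b o0 - a o4 * b o5 + a o5 * b o4)
  | 4%N, 0%N => (- a o1 * b o5 - a o2 * b o6 + a o5 * b o1 + a o6 * b o2)
  | 4%N, 1%N => (a o0 * b o5 - a o2 * b o3 + a o3 * b o2 - a o5 * b o0)
  | 4%N, 2%N => (a o0 * b o6 + a o1 * b o3 - a o3 * b o1 - a o6 * b o0)
  | 4%N, 3%N => (- a o1 * b o2 + a o2 * b o1 + a o5 * b o6 - a o6 * b o5)
  | 4%N, 4%N => 0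
  | 4%N, 5%N => (- a o0 * b o1 + a o1 * b o0 - a o3 * b o6 + a o6 * b o3)
  | 4%N, 6%N => (- a o0 * b o2 + a o2 * b o0 + a o3 * b o5 - a o5 * b o3)
  | 5%N, 0%N => (a o1 * b o4 + a o2 * b o3 - a o3 * b o2 - a o4 * b o1)
  | 5%N, 1%N => (- a o0 * b o4 - a o2 * b o6 + a o4 * b o0 + a o6 * b o2)
  | 5%N, 2%N => (- a o0 * b o3 + a o1 * b o6 + a o3 * b o0 - a o6 * b o1)
  | 5%N, 3%N => (a o0 * b o2 - a o2 * b o0 - a o4 * b o6 + a o6 * b o4)
  | 5%N, 4%N => (a o0 * b o1 - a o1 * b o0 + a o3 * b o6 - a o6 * b o3)
  | 5%N, 5%N => 0
  | 5%N, 6%N => (- a o1 * b o2 + a o2 * b o1 - a o3 * b o4 + a o4 * b o3)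
  | 6%N, 0%N => (- a o1 * b o3 + a o2 * b o4 + a o3 * b o1 - a o4 * b o2)
  | 6%N, 1%N => (a o0 * b o3 + a o2 * b o5 - a o3 * b o0 - a o5 * b o2)
  | 6%N, 2%N => (- a o0 * b o4 - a o1 * b o5 + a o4 * b o0 + a o5 * b o1)
  | 6%N, 3%N => (- a o0 * b o1 + a o1 * b o0 + a o4 * b o5 - a o5 * b o4)
  | 6%N, 4%N => (a o0 * b o2 - a o2 * b o0 - a o3 * b o5 + a o5 * b o3)
  | 6%N, 5%N => (a o1 * b o2 - a o2 * b o1 + a o3 * b o4 - a o4 * b o3)
  | 6%N, 6%N => 0
  | _, _ => 0 end.



Section S.
Variable R : realType.
Implicit Types u v w x : 'rV[R]_7.

Definition fe3 i j k u v w (a b : nat) : R := (nth 0 [:: u; v; w] b) 0 (nth o0 [:: ix i; ix j; ix k] a).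
Definition fe4 i j k l u v w x (a b : nat) : R := (nth 0 [:: u; v; w; x] b) 0 (nth o0 [:: ix i; ix j; ix k; ix l] a).
Lemma e3E i j k u v w : e3 i j k u v w =
  \det (\matrix_(a < 3, b < 3) fe3 i j k u v w a b).
Proof.
rewrite /e3; congr (\det _); apply/matrixP => a b; rewrite !mxE /fe3 /fe4.
by rewrite (tnth_nth 0) (tnth_nth o0).
Qed.

Lemma e4E i j k l u v w x : e4 i j k l u v w x =
  \det (\matrix_(a < 4, b < 4) fe4 i j k l u v w x a b).
Proof.
rewrite /e4; congr (\det _); apply/matrixP => a b; rewrite !mxE /fe3 /fe4.
by rewrite (tnth_nth 0) (tnth_nth o0).
Qed.

Lemma crossE u v k : cross u v 0 k = crossf (u 0) (v 0) k.
Proof.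
rewrite mxE /phi !e3E !det3 /fe3 /= !ixE.
case: (ord7 k) => [->|[->|[->|[->|[->|[->|->]]]]]]; rewrite !mxE /=; ring.
Qed.

Lemma psiE u v x y : psi u v x y = \sum_a \sum_b x 0 a * y 0 b * Psif (u 0) (v 0) b a.
Proof.
rewrite /psi !e4E !det4 /fe4 /= !ixE !sum7 /=.
ring.
Qed.

Lemma sum_delta (F : 'I_7 -> R) j : \sum_a (delta_mx 0 j : 'rV[R]_7) 0 a * F a = F j.
Proof.
rewrite (bigD1 j) //= big1 ?addr0; first by rewrite mxE !eqxx /= mul1r.
by move=> a /negbTE naj; rewrite mxE naj andbF mul0r.
Qed.

Lemma PsiE u v i j : Psi u v i j = Psif (u 0) (v 0) i j.
Proof.
rewrite mxE psiE.
rewrite (eq_bigr (fun a => (delta_mx 0 j : 'rV[R]_7) 0 a * \sum_b (delta_mx 0 i : 'rV[R]_7) 0 b * Psif (u 0) (v 0) b a)); last first.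
  by move=> a _; rewrite mulr_sumr; apply: eq_bigr => b _; rewrite mulrA.
rewrite sum_delta; exact: sum_delta.
Qed.

Lemma PsiME u v : Psi u v = \matrix_(i, j) Psif (u 0) (v 0) i j.
Proof. by apply/matrixP => i j; rewrite PsiE mxE. Qed.

Lemma dotE u v : dot u v = u 0 o0 * v 0 o0 + u 0 o1 * v 0 o1 + u 0 o2 * v 0 o2 + u 0 o3 * v 0 o3 + u 0 o4 * v 0 o4 + u 0 o5 * v 0 o5 + u 0 o6 * v 0 o6.
Proof. by rewrite /dot sum7. Qed.

Ltac c7 k := case: (ord7 k) => [->|[->|[->|[->|[->|[->|->]]]]]].

Lemma cross_dot_l u v : dot (cross u v) u = 0.
Proof. rewrite dotE !crossE /=; ring. Qed.
Lemma cross_dot_r u v : dot (cross u v) v = 0.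
Proof. rewrite dotE !crossE /=; ring. Qed.
Lemma cross_norm u v : dot (cross u v) (cross u v) = dot u u * dot v v - dot u v ^+ 2.
Proof. rewrite !dotE !crossE /=; ring. Qed.
Lemma dotC u v : dot u v = dot v u.
Proof. rewrite !dotE; ring. Qed.

Lemma cross_cross1 u v : cross v (cross u v) = dot v v *: u - dot u v *: v.
Proof.
apply/rowP => k; rewrite crossE; c7 k; rewrite /= ?crossE /= !dotE ?mxE; ring.
Qed.
Lemma cross_cross2 u v : cross (cross u v) u = dot u u *: v - dot u v *: u.
Proof.
apply/rowP => k; rewrite crossE; c7 k; rewrite /= ?crossE /= !dotE ?mxE; ring.
Qed.

Lemma Psi_skew u v : (Psi u v)^T = - Psi u v.
Proof.
apply/matrixP => i j; rewrite !PsiME !mxE; c7 i; c7 j; rewrite /=; ring.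
Qed.

Lemma Psi_comb a1 a2 a3 b1 b2 b3 (x y z : 'rV[R]_7) :
  Psi (a1 *: x + a2 *: y + a3 *: z) (b1 *: x + b2 *: y + b3 *: z) =
  (a2 * b3 - a3 * b2) *: Psi y z + (a3 * b1 - a1 * b3) *: Psi z x + (a1 * b2 - a2 * b1) *: Psi x y.
Proof.
apply/matrixP => i j; rewrite !PsiME !mxE; c7 i; c7 j; rewrite /= ?mxE; ring.
Qed.

Definition pair (A B : 'M[R]_7) : R := \sum_i \sum_j A i j * B i j.

Lemma pairE u v x y : pair (Psi u v) (Psi x y) = 4 * (dot u x * dot v y - dot u y * dot v x) - 2 * psi u v x y.
Proof.
rewrite /pair psiE !PsiME !sum7 !mxE !dotE /=; ring.
Qed.

Lemma psi_uvux u v x : psi u v x u = 0.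
Proof. rewrite psiE !sum7 /=; ring. Qed.
Lemma psi_uvvx u v x : psi u v v x = 0.
Proof. rewrite psiE !sum7 /=; ring. Qed.
Lemma psi_uvuv u v : psi u v u v = 0.
Proof. rewrite psiE !sum7 /=; ring. Qed.

Lemma skew_eq (M N : 'M[R]_7) : M^T = - M -> N^T = - N ->
  (forall i j : 'I_7, (i < j)%N -> M i j = N i j) -> M = N.
Proof.
move=> HM HN H; apply/matrixP => i j.
have sM : forall a b, M a b = - M b a.
  by move=> a b; have := congr1 (fun X : 'M[R]_7 => X b a) HM; rewrite !mxE.
have sN : forall a b, N a b = - N b a.
  by move=> a b; have := congr1 (fun X : 'M[R]_7 => X b a) HN; rewrite !mxE.
case: (ltngtP i j) => [lt|gt|eq]; first exact: H.
  by rewrite sM sN H.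
have -> : j = i by apply: val_inj.
have z : forall (x : R), x = - x -> x = 0.
  by move=> x hx; lra.
by rewrite (z _ (sM i i)) (z _ (sN i i)).
Qed.

Lemma lie_skew (A B : 'M[R]_7) : A^T = - A -> B^T = - B -> (lie A B)^T = - lie A B.
Proof.
move=> hA hB; rewrite /lie linearB /= !trmx_mul hA hB !mulNmx !mulmxN !opprK opprB //.
Qed.

Lemma L1 u v : lie (Psi v (cross u v)) (Psi (cross u v) u) = (2 * (dot u u * dot v v - dot u v ^+ 2)) *: Psi u v.
Proof.
apply: skew_eq.
- by apply: lie_skew; apply: Psi_skew.
- by rewrite linearZ /= Psi_skew scalerN.
move=> i j; rewrite /lie !PsiME !mxE !sum7 !mxE.
c7 i; c7 j; rewrite /= => // _; rewrite ?crossE /= !dotE; ring.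
Qed.

End S.
Section M.
Variable R : realType.
Implicit Types u v w x : 'rV[R]_7.

Lemma dotDl a x y z : dot (a *: x + y) z = a * dot x z + dot y z.
Proof. rewrite !dotE !mxE; ring. Qed.
Lemma dotDr a x y z : dot z (a *: x + y) = a * dot z x + dot z y.
Proof. rewrite !dotE !mxE; ring. Qed.
Lemma dotZl a x z : dot (a *: x) z = a * dot x z.
Proof. rewrite !dotE !mxE; ring. Qed.
Lemma dotZr a x z : dot z (a *: x) = a * dot z x.
Proof. rewrite !dotE !mxE; ring. Qed.

Lemma dot_eq0 x : dot x x = 0 -> x = 0.
Proof.
rewrite /dot => H; apply/rowP => k; rewrite mxE.
have hp : forall i : 'I_7, true -> 0 <= x 0 i * x 0 i by move=> i _; nra.
have := @psumr_eq0P _ _ (fun _ => true) (fun i => x 0 i * x 0 i) hp H k isT.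
by move/eqP; rewrite mulf_eq0 orbb => /eqP.
Qed.

Lemma dot_ge0 x : 0 <= dot x x.
Proof. by rewrite /dot; apply: sumr_ge0 => i _; nra. Qed.

Lemma normalize x : x != 0 -> dot ((Num.sqrt (dot x x))^-1 *: x) ((Num.sqrt (dot x x))^-1 *: x) = 1.
Proof.
move=> nx; rewrite dotZl dotZr mulrA -expr2 exprVn sqr_sqrtr ?dot_ge0 // mulVf //.
by apply/eqP => /dot_eq0 h; rewrite h eqxx in nx.
Qed.

Lemma dotD x y z : dot (x + y) z = dot x z + dot y z.
Proof. rewrite !dotE !mxE; ring. Qed.

Lemma frame (P : 'M[R]_7) : \rank P = 3%N ->
  (forall u v, (u <= P)%MS -> (v <= P)%MS -> (cross u v <= P)%MS) ->
  exists e1 e2, [/\ (e1 <= P)%MS, (e2 <= P)%MS, dot e1 e1 = 1, dot e2 e2 = 1 & dot e1 e2 = 0] /\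
   forall x, (x <= P)%MS -> x = dot x e1 *: e1 + dot x e2 *: e2 + dot x (cross e1 e2) *: cross e1 e2.
Proof.
move=> rP cl.
have [i0 nz0] : exists i, row i P != 0.
  case: (pickP (fun i => row i P != 0)) => [i hi|h]; first by exists i.
  have P0 : P = 0 by apply/row_matrixP => i; have := h i; rewrite /= => /negbFE/eqP ->; rewrite row0.
  by move: rP; rewrite P0 mxrank0.
set x0 := row i0 P.
set e1 := (Num.sqrt (dot x0 x0))^-1 *: x0.
have e1P : (e1 <= P)%MS by rewrite scalemx_sub // row_sub.
have n1 : dot e1 e1 = 1 by apply: normalize.
have [i1 ni1] : exists i, ~~ (row i P <= e1)%MS.
  case: (pickP (fun i => ~~ (row i P <= e1)%MS)) => [i hi|h]; first by exists i.
  have : (P <= e1)%MS by apply/row_subP => i; have := h i; rewrite /= => /negbFE.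
  move/mxrankS; rewrite rP => h3.
  by have := leq_trans h3 (rank_leq_row e1).
set r := row i1 P.
set r' := (- dot r e1) *: e1 + r.
have nr' : r' != 0.
  apply/eqP => h; move: ni1; rewrite -/r.
  have -> : r = dot r e1 *: e1.
    by apply/eqP; rewrite -subr_eq0 -scaleNr addrC; apply/eqP.
  by rewrite scalemx_sub ?submx_refl.
set e2 := (Num.sqrt (dot r' r'))^-1 *: r'.
have e2P : (e2 <= P)%MS by rewrite scalemx_sub // addmx_sub ?scalemx_sub // row_sub.
have n2 : dot e2 e2 = 1 by apply: normalize.
have o12 : dot e1 e2 = 0.
  have o1r : dot e1 r' = 0 by rewrite /r' dotDr n1 (dotC e1 r) mulr1 addNr.
  by rewrite /e2 dotZr o1r mulr0.
set e3 := cross e1 e2.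
have e3P : (e3 <= P)%MS by apply: cl.
have n3 : dot e3 e3 = 1 by rewrite /e3 cross_norm n1 n2 o12; ring.
have o13 : dot e1 e3 = 0 by rewrite dotC cross_dot_l.
have o23 : dot e2 e3 = 0 by rewrite dotC cross_dot_r.
have o21 : dot e2 e1 = 0 by rewrite dotC.
have o31 : dot e3 e1 = 0 by rewrite dotC.
have o32 : dot e3 e2 = 0 by rewrite dotC.
clearbody e1 e2.
exists e1, e2; split; first by [].
set E : 'M[R]_(3, 7) := \matrix_(i < 3) nth 0 [:: e1; e2; e3] i.
have EP : (E <= P)%MS.
  by apply/row_subP => i; rewrite rowK; case: i => [[|[|[|i]]] hi].
have EE : E *m E^T = 1%:M.
  apply/matrixP => i j; rewrite !mxE.
  have -> : \sum_k E i k * E^T k j = dot (nth 0 [:: e1; e2; e3] i) (nth 0 [:: e1; e2; e3] j).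
    by rewrite /dot; apply: eq_bigr => k _; rewrite !mxE.
  by case: i => [[|[|[|i]]] hi] //; case: j => [[|[|[|j]]] hj].
have rE : \rank E = 3%N.
  apply/eqP; rewrite eqn_leq rank_leq_row /=.
  by have := mxrankM_maxl E E^T; rewrite EE mxrank1.
have PE : (P <= E)%MS.
  by have := (mxrank_leqif_eq EP).2; rewrite rE rP eqxx => /esym/andP [].
move=> x xP; have /submxP [c ->] := submx_trans xP PE.
have [a [b [d ->]]] : exists a b d, c *m E = a *: e1 + b *: e2 + d *: e3.
  rewrite mulmx_sum_row !big_ord_recr big_ord0 /=; do 3 eexists; rewrite !rowK /= ?add0r; reflexivity.
rewrite -/e3 !dotD !dotZl n1 n2 n3 o12 o13 o23 o21 o31 o32.
by rewrite !mulr0 !mulr1 !addr0 !add0r.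
Qed.

End M.

Definition q0 : 'I_3 := @Ordinal 3 0 isT.
Definition q1 : 'I_3 := @Ordinal 3 1 isT.
Definition q2 : 'I_3 := @Ordinal 3 2 isT.

Lemma ord3 (i : 'I_3) : i = q0 \/ i = q1 \/ i = q2.
Proof.
case: i => [[|[|[|i]]] Hi].
- by left; apply: val_inj.
- by right; left; apply: val_inj.
- by do 2 right; apply: val_inj.
- by [].
Qed.

Lemma sum3 (R : nmodType) (F : 'I_3 -> R) : \sum_(k < 3) F k = F q0 + F q1 + F q2.
Proof.
rewrite !big_ord_recr big_ord0 /= add0r.
congr (_ + _ + _); congr F; exact: val_inj.
Qed.

Section F.
Variable R : realType.
Implicit Types A B C : 'M[R]_7.

Lemma lieDl A B C : lie (A + B) C = lie A C + lie B C.
Proof. by rewrite /lie mulmxDl mulmxDr opprD addrACA. Qed.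
Lemma lieDr A B C : lie C (A + B) = lie C A + lie C B.
Proof. by rewrite /lie mulmxDl mulmxDr opprD addrACA. Qed.
Lemma lieZl a A B : lie (a *: A) B = a *: lie A B.
Proof. by rewrite /lie scalerBr -scalemxAl -scalemxAr. Qed.
Lemma lieZr a A B : lie A (a *: B) = a *: lie A B.
Proof. by rewrite /lie scalerBr -scalemxAl -scalemxAr. Qed.
Lemma lie_anti A B : lie A B = - lie B A.
Proof. by rewrite /lie opprB. Qed.
Lemma lie_self A : lie A A = 0.
Proof. by rewrite /lie subrr. Qed.

Definition comb A1 A2 A3 (a b c : R) := a *: A1 + b *: A2 + c *: A3.

Lemma lie_comb A1 A2 A3 : lie A1 A2 = 2 *: A3 -> lie A2 A3 = 2 *: A1 -> lie A3 A1 = 2 *: A2 ->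
  forall a b c a' b' c', lie (comb A1 A2 A3 a b c) (comb A1 A2 A3 a' b' c') =
    comb A1 A2 A3 (2 * (b * c' - c * b')) (2 * (c * a' - a * c')) (2 * (a * b' - b * a')).
Proof.
move=> h12 h23 h31 a b c a' b' c'.
rewrite /comb !lieDl !lieDr !lieZl !lieZr !lie_self (lie_anti A2 A1) (lie_anti A3 A2) (lie_anti A1 A3) h12 h23 h31.
apply/matrixP => i j; rewrite !mxE; ring.
Qed.

Lemma pairDl A B C : pair (A + B) C = pair A C + pair B C.
Proof.
rewrite /pair -big_split; apply: eq_bigr => i _; rewrite -big_split; apply: eq_bigr => j _.
by rewrite mxE mulrDl.
Qed.
Lemma pairZl a A C : pair (a *: A) C = a * pair A C.
Proof.
rewrite /pair mulr_sumr; apply: eq_bigr => i _; rewrite mulr_sumr; apply: eq_bigr => j _.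
by rewrite mxE mulrA.
Qed.
Lemma pair0 C : pair 0 C = 0.
Proof. by rewrite /pair big1 // => i _; rewrite big1 // => j _; rewrite mxE mul0r. Qed.

Definition sk (a b c : R) : 'M[R]_3 :=
  \matrix_(i < 3, j < 3) nth 0 (nth [::] [:: [:: 0; - c; b]; [:: c; 0; - a]; [:: - b; a; 0]] i) j.

Ltac c3 k := case: (ord3 k) => [->|[->|->]].

Lemma so3E (X : 'M[R]_3) : so3 X -> X = sk (X q2 q1) (X q0 q2) (X q1 q0).
Proof.
move=> hX.
have s : forall i j, X i j = - X j i.
  by move=> i j; have := congr1 (fun M : 'M[R]_3 => M j i) hX; rewrite !mxE.
apply/matrixP => i j; rewrite mxE; c3 i; c3 j => /=;
  by [ have := s q0 q0; lra | have := s q1 q1; lra | have := s q2 q2; lra | rewrite s | ].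
Qed.

Lemma sk_so3 a b c : so3 (sk a b c).
Proof.
by apply/matrixP => i j; rewrite !mxE; c3 i; c3 j; rewrite /= ?opprK ?oppr0.
Qed.

Lemma half2 (t : R) : (2 * t) / 2 = t.
Proof. by rewrite mulrC mulrA mulVf ?mul1r // pnatr_eq0. Qed.

Lemma main_frame (P : 'M[R]_7) (e1 e2 : 'rV[R]_7) :
  (e1 <= P)%MS -> (e2 <= P)%MS -> dot e1 e1 = 1 -> dot e2 e2 = 1 -> dot e1 e2 = 0 ->
  (cross e1 e2 <= P)%MS ->
  (forall x, (x <= P)%MS -> x = dot x e1 *: e1 + dot x e2 *: e2 + dot x (cross e1 e2) *: cross e1 e2) ->
  (forall X Y, PsiSpan P X -> PsiSpan P Y -> PsiSpan P (lie X Y)) /\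
  (exists f : 'M[R]_3 -> 'M[R]_7,
     (forall (a : R) X Y, f (a *: X + Y) = a *: f X + f Y) /\
     (forall X, so3 X -> PsiSpan P (f X)) /\
     (forall X Y, so3 X -> so3 Y -> f X = f Y -> X = Y) /\
     (forall Z, PsiSpan P Z -> exists X, so3 X /\ f X = Z) /\
     (forall X Y, so3 X -> so3 Y -> f (lie X Y) = lie (f X) (f Y))).
Proof.
move=> e1P e2P n1 n2 o12 e3P sp.
set e3 := cross e1 e2 in e3P sp.
have n3 : dot e3 e3 = 1 by rewrite /e3 cross_norm n1 n2 o12; ring.
have o13 : dot e1 e3 = 0 by rewrite dotC cross_dot_l.
have o23 : dot e2 e3 = 0 by rewrite dotC cross_dot_r.
have o21 : dot e2 e1 = 0 by rewrite dotC.
have o31 : dot e3 e1 = 0 by rewrite dotC.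
have o32 : dot e3 e2 = 0 by rewrite dotC.
have c23 : cross e2 e3 = e1 by rewrite /e3 cross_cross1 n2 o12 scale1r scale0r subr0.
have c31 : cross e3 e1 = e2 by rewrite /e3 cross_cross2 n1 o12 scale1r scale0r subr0.
set A1 := Psi e2 e3; set A2 := Psi e3 e1; set A3 := Psi e1 e2.
have two : forall x y z : R, x = 1 -> y = 1 -> z = 0 -> 2 * (x * y - z ^+ 2) = 2.
  by move=> x y z -> -> ->; ring.
have h12 : lie A1 A2 = 2 *: A3 by rewrite /A1 /A2 /A3 /e3 L1 two.
have h23 : lie A2 A3 = 2 *: A1.
  by have := L1 e2 e3; rewrite c23 two // => ->.
have h31 : lie A3 A1 = 2 *: A2.
  by have := L1 e3 e1; rewrite c31 two // => ->.
have indep : forall a b c, comb A1 A2 A3 a b c = 0 -> [/\ a = 0, b = 0 & c = 0].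
  move=> a b c h.
  have P1 := congr1 (fun X => pair X A1) h.
  have P2 := congr1 (fun X => pair X A2) h.
  have P3 := congr1 (fun X => pair X A3) h.
  move: P1 P2 P3; rewrite /comb /= !pairDl !pairZl !pair0 /A1 /A2 /A3 !pairE
    ?psi_uvuv ?psi_uvux ?psi_uvvx n1 n2 n3 o12 o13 o23 o21 o31 o32.
  move=> P1 P2 P3; split; lra.
have psp : forall u v, (u <= P)%MS -> (v <= P)%MS -> Psi u v =
    comb A1 A2 A3 (dot u e2 * dot v e3 - dot u e3 * dot v e2)
                  (dot u e3 * dot v e1 - dot u e1 * dot v e3)
                  (dot u e1 * dot v e2 - dot u e2 * dot v e1).
  move=> u v uP vP.
  have := Psi_comb (dot u e1) (dot u e2) (dot u e3) (dot v e1) (dot v e2) (dot v e3) e1 e2 e3.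
  by rewrite -(sp u uP) -(sp v vP) => ->.
have spanI : forall Z, PsiSpan P Z <-> exists a b c, Z = comb A1 A2 A3 a b c.
  move=> Z; split.
    case=> n [c [u [v [huv ->]]]].
    exists (\sum_i c i * (dot (u i) e2 * dot (v i) e3 - dot (u i) e3 * dot (v i) e2)).
    exists (\sum_i c i * (dot (u i) e3 * dot (v i) e1 - dot (u i) e1 * dot (v i) e3)).
    exists (\sum_i c i * (dot (u i) e1 * dot (v i) e2 - dot (u i) e2 * dot (v i) e1)).
    rewrite /comb !scaler_suml -!big_split /=; apply: eq_bigr => i _.
    have [uP vP] := huv i.
    by rewrite psp // /comb !scalerDr !scalerA.
  case=> a [b [c ->]].
  exists 3%N, (fun i => nth 0 [:: a; b; c] i), (fun i => nth 0 [:: e2; e3; e1] i),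
    (fun i => nth 0 [:: e3; e1; e2] i); split.
    by move=> i; c3 i.
  by rewrite sum3 /=.
have comb_sub : forall a b c a' b' c', comb A1 A2 A3 a b c - comb A1 A2 A3 a' b' c' = comb A1 A2 A3 (a - a') (b - b') (c - c').
  by move=> *; rewrite /comb; apply/matrixP => i j; rewrite !mxE; ring.
split.
  move=> X Y /spanI [a [b [c ->]]] /spanI [a' [b' [c' ->]]]; apply/spanI.
  by rewrite lie_comb //; do 3 eexists.
exists (fun X : 'M[R]_3 => comb A1 A2 A3 (X q2 q1 / 2) (X q0 q2 / 2) (X q1 q0 / 2)).
split; [|split; [|split; [|split]]].
- by move=> a X Y; rewrite /comb; apply/matrixP => i j; rewrite !mxE; ring.
- by move=> X _; apply/spanI; do 3 eexists.
- move=> X Y hX hY hf.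
  have := comb_sub (X q2 q1 / 2) (X q0 q2 / 2) (X q1 q0 / 2) (Y q2 q1 / 2) (Y q0 q2 / 2) (Y q1 q0 / 2).
  rewrite hf subrr => /esym/indep [ha hb hc].
  rewrite (so3E hX) (so3E hY).
  have -> : X q2 q1 = Y q2 q1 by lra.
  have -> : X q0 q2 = Y q0 q2 by lra.
  by have -> : X q1 q0 = Y q1 q0 by lra.
- move=> Z /spanI [a [b [c ->]]]; exists (sk (2 * a) (2 * b) (2 * c)); split; first exact: sk_so3.
  by rewrite !mxE /= !half2.
- move=> X Y hX hY; rewrite (so3E hX) (so3E hY).
  move: (X q2 q1) (X q0 q2) (X q1 q0) (Y q2 q1) (Y q0 q2) (Y q1 q0) => a b c a' b' c'.
  rewrite lie_comb //; congr comb; rewrite /lie !mxE !sum3 !mxE /=; field => //.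
Qed.

End F.

Unset Implicit Arguments.

Theorem proposition4p5 (R : realType) (P : 'M[R]_7) :
  associative_plane P ->
  (forall X Y, PsiSpan P X -> PsiSpan P Y -> PsiSpan P (lie X Y)) /\
  (exists f : 'M[R]_3 -> 'M[R]_7,
     (forall (a : R) X Y, f (a *: X + Y) = a *: f X + f Y) /\
     (forall X, so3 X -> PsiSpan P (f X)) /\
     (forall X Y, so3 X -> so3 Y -> f X = f Y -> X = Y) /\
     (forall Z, PsiSpan P Z -> exists X, so3 X /\ f X = Z) /\
     (forall X Y, so3 X -> so3 Y -> f (lie X Y) = lie (f X) (f Y))).
Proof.
case=> rP cl.
have [e1 [e2 [[e1P e2P n1 n2 o12] sp]]] := frame rP cl.
exact: main_frame e1P e2P n1 n2 o12 (cl _ _ e1P e2P) sp.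
Qed.
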